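(* Let $M$ and $M'$ be two stable matchings in an instance $I$ of SPA-S, and let $s$ be a student assigned in $M$ to a project $p_j$ offered by lecturer $l_k$. If $s$ prefers $M$ to $M'$, and either $s\in M'(l_k)$ or $l_k$ prefers $s$ to at least one student in $M'(l_k)$, then $p_j$ is full in $M'$.
   Context: An instance $I$ of SPA-S consists of a finite set $\mathcal{S}$ of students, a finite set $\mathcal{P}$ of projects and a finite set $\mathcal{L}$ of lecturers. Each student $s_i$ ranks a subset $A_i\subseteq\mathcal{P}$ (its acceptable projects) in strict order. Each project is offered by exactly one lecturer; lecturer $l_k$ offers a nonempty set $P_k\subseteq\mathcal{P}$, the $P_k$ partitioning $\mathcal{P}$. Each lecturer $l_k$ ranks in strict order the students who find at least one project of $P_k$ acceptable. Projects have capacities $c_j\in\mathbb{Z}^+$, lecturers have capacities $d_k\in\mathbb{Z}^+$ with $\max\{c_j:p_j\in P_k\}\le d_k\le\sum\{c_j:p_j\in P_k\}$. A pair $(s_i,p_j)$, $p_j$ offered by $l_k$, is acceptable if $p_j\in A_i$ and $s_i$ is on $l_k$'s list. A matching $M$ is a set of acceptable pairs with each student in at most one pair, $|M(p_j)|\le c_j$, $|M(l_k)|\le d_k$, where $M(s_i)$, $M(p_j)$, $M(l_k)$ denote the project of $s_i$, the students assigned to $p_j$, and the students assigned to projects of $l_k$. Undersubscribed/full means fewer than/exactly capacity many assigned students. An acceptable pair $(s_i,p_j)\notin M$ ($p_j$ offered by $l_k$) blocks $M$ if ($s_i$ is unassigned or prefers $p_j$ to $M(s_i)$) and one of: (P1)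 $p_j$ and $l_k$ undersubscribed; (P2) $p_j$ undersubscribed, $l_k$ full, $s_i\in M(l_k)$; (P3) $p_j$ undersubscribed, $l_k$ full, $l_k$ prefers $s_i$ to the worst student of $M(l_k)$; (P4) $p_j$ full and $l_k$ prefers $s_i$ to the worst student of $M(p_j)$. $M$ is stable if it has no blocking pair. A student $s$ prefers $M$ to $M'$ if $s$ is assigned in both and prefers $M(s)$ to $M'(s)$. *)

(* Defs.v *)
From mathcomp Require Import all_boot.
Set Implicit Arguments. Unset Strict Implicit. Unset Printing Implicit Defensive.

Record SPAS := {
  Student : finType; Project : finType; Lecturer : finType;
  acc : Student -> Project -> bool;
  srank : Student -> Project -> nat;
  srank_inj : forall s p q, acc s p -> acc s q -> srank s p = srank s q -> p = q;
  offer : Project -> Lecturer;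
  lrank : Lecturer -> Student -> nat;
  lrank_inj : forall l s t,
      [exists p, (offer p == l) && acc s p] ->
      [exists p, (offer p == l) && acc t p] ->
      lrank l s = lrank l t -> s = t;
  pcap : Project -> nat;
  lcap : Lecturer -> nat;
  pcap_pos : forall p, 0 < pcap p;
  lcap_offers : forall l, [exists p, offer p == l];
  lcap_ge : forall p, pcap p <= lcap (offer p);
  lcap_le : forall l, lcap l <= \sum_(p | offer p == l) pcap p
}.

Section Defs.
Variable I : SPAS.

Definition on_list (l : Lecturer I) (s : Student I) : bool :=
  [exists p, (offer p == l) && acc s p].

Definition acceptable (s : Student I) (p : Project I) : bool :=
  acc s p && on_list (offer p) s.

Definition sprefers (s : Student I) (p q : Project I) : bool :=
  srank s p < srank s q.

Definition lprefers (l : Lecturer I) (s t : Student I) : bool :=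
  lrank l s < lrank l t.

Definition assignment := Student I -> option (Project I).

Definition Mp (M : assignment) (p : Project I) : {set Student I} :=
  [set s | M s == Some p].
Definition Ml (M : assignment) (l : Lecturer I) : {set Student I} :=
  [set s | if M s is Some p then offer p == l else false].

Definition is_matching (M : assignment) : Prop :=
  (forall s p, M s = Some p -> acceptable s p) /\
  (forall p, #|Mp M p| <= pcap p) /\
  (forall l, #|Ml M l| <= lcap l).

Definition p_full M p := #|Mp M p| == pcap p.
Definition p_under M p := #|Mp M p| < pcap p.
Definition l_full M l := #|Ml M l| == lcap l.
Definition l_under M l := #|Ml M l| < lcap l.

Definition is_worst (l : Lecturer I) (S : {set Student I}) (w : Student I) :=
  w \in S /\ forall t, t \in S -> lrank l t <= lrank l w.

Definition prefers_to_worst l (S : {set Student I}) s : Prop :=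
  exists w, is_worst l S w /\ lprefers l s w.

Definition blocking (M : assignment) (s : Student I) (p : Project I) : Prop :=
  let l := offer p in
  acceptable s p /\ M s <> Some p /\
  (match M s with None => True | Some q => sprefers s p q end) /\
  ( (p_under M p /\ l_under M l)
  \/ (p_under M p /\ l_full M l /\ s \in Ml M l)
  \/ (p_under M p /\ l_full M l /\ prefers_to_worst l (Ml M l) s)
  \/ (p_full M p /\ prefers_to_worst l (Mp M p) s)).

Definition stable (M : assignment) : Prop :=
  is_matching M /\ forall s p, ~ blocking M s p.

Definition sprefers_matching (M M' : assignment) (s : Student I) : Prop :=
  exists p q, M s = Some p /\ M' s = Some q /\ sprefers s p q.

End Defs.

(* Main.v *)
Require Import Defs.
From mathcomp Require Import all_boot.

Theorem proposition2 (I : SPAS) (M M' : assignment I) (s : Student I) (pj : Project I) :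
  stable M -> stable M' ->
  M s = Some pj ->
  sprefers_matching M M' s ->
  (s \in Ml M' (offer pj) \/
   exists t, t \in Ml M' (offer pj) /\ lprefers (offer pj) s t) ->
  p_full M' pj.
Proof.
move=> [[MA _] _] [[_ [M'p M'l]] M'st] Ms [p [q [Ms' [M's spq]]]] Hl.
rewrite Ms in Ms'; case: Ms' => ?; subst p.
apply/negPn/negP => nfull.
have pu : p_under M' pj.
  by rewrite /p_under ltn_neqAle nfull M'p.
apply: (M'st s pj).
have neq : M' s <> Some pj.
  by rewrite M's => -[Eq]; subst q; rewrite /sprefers ltnn in spq.
split; first exact: MA.
split; first exact: neq.
split; first by rewrite M's.
have [lf|lu] := boolP (l_full M' (offer pj)); last first.
  left; split => //; by rewrite /l_under ltn_neqAle lu M'l.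
right.
case: Hl => [Hin|[t [tin st]]].
  by left; split.
right; left; split => //; split => //.
case: (@arg_maxnP _ t (mem (Ml M' (offer pj))) (lrank (offer pj)) tin) => w win wmax.
exists w; split; first by split.
by apply: leq_trans st _; apply: wmax.
Qed.
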